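(* Let $H$ be a real or complex Hilbert space of dimension $n$, let $N\ge n$, let $\{q_i\}_{i=1}^N$ be a weight number sequence, and let $F=\{f_i\}_{i=1}^N$ be a probabilistic uniform Parseval frame for $H$. Then its canonical dual is the unique 1-erasure probabilistic optimal dual of $F$, and therefore it is an $m$-erasure probabilistic optimal dual of $F$ for every $m$.
   Context: Inner products are linear in the first argument. A frame $F=\{f_i\}_{i=1}^N$ for $H$ is Parseval if $\sum_i|\langle f,f_i\rangle|^2=\|f\|^2$ for all $f$. A probabilistic uniform Parseval frame is a Parseval frame with $\|f_i\|^2=1/q_i$ for all $i$. Frame operator: $S_F=\Theta_F^*\Theta_F$, where $\Theta_Ff=(\langle f,f_i\rangle)_i$. The canonical dual is $\{S_F^{-1}f_i\}$. A dual of $F$ is a frame $G=\{g_i\}_{i=1}^N$ with $f=\sum_i\langle f,f_i\rangle g_i=\sum_i\langle f,g_i\rangle f_i$ for all $f$. A probability sequence satisfies $0\le p_i\le1$ and $\sum p_i=1$. Weight numbers: $q_i=\frac{\sum_jp_j}{\sum_jp_j-p_i}\cdot\frac{N-1}{n}$ (assumed well defined). For $1\le m\le N$, $\mathcal{D}_m^p$ is the set of $N\times N$ diagonal matrices $D$ for which there is $\Lambda$ with $|\Lambda|=m$, $D_{ii}=q_i$ for $i\in\Lambda$ and $0$ otherwise. $d_m^p(F,G)=\max\{\|\Theta_G^*D\Theta_F\|:D\in\mathcal{D}_m^p\}$ (operator norm), where $\Theta_G^*(c)=\sum_ic_ig_i$. Optimal duals are defined recursively: - $G$ is a 1-erasure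 probabilistic optimal dual of $F$ if $d_1^p(F,G)=\inf\{d_1^p(F,G'):G'\text{ a dual of }F\}$; - for $m\ge2$, $G$ is an $m$-erasure probabilistic optimal dual if it is an $(m-1)$-erasure probabilistic optimal dual and $d_m^p(F,G)=\inf\{d_m^p(F,G'):G'\text{ an }(m-1)\text{-erasure probabilistic optimal dual of }F\}$. *)

(* Defs.v *)
(* Scalars live in C := R[i] for an
   arbitrary R : realType; the real Hilbert space R^n is realized as the
   vectors of C^n with real entries. *)
From HB Require Import structures.
From mathcomp Require Import all_boot all_order all_algebra.
From mathcomp Require Import complex.
From mathcomp Require Import boolp classical_sets reals.
Set Implicit Arguments. Unset Strict Implicit. Unset Printing Implicit Defensive.
Import Order.TTheory GRing.Theory Num.Theory.
Local Open Scope ring_scope.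
Local Open Scope complex_scope.
Local Open Scope classical_set_scope.

Section Frames.
Variable R : realType.
Local Notation C := R[i].

Definition scal (isreal : bool) : pred C :=
  fun z => if isreal then complex.Im z == 0 else true.

Definition inH (isreal : bool) (n : nat) (x : 'cV[C]_n) : Prop :=
  forall k, scal isreal (x k 0).

Definition inner (n : nat) (x y : 'cV[C]_n) : C :=
  \sum_k x k 0 * Num.conj (y k 0).

Definition normv (n : nat) (x : 'cV[C]_n) : R :=
  Num.sqrt (complex.Re (inner x x)).

Definition opnorm (isreal : bool) (n : nat) (A : 'M[C]_n) : R :=
  sup [set r : R | exists f : 'cV[C]_n,
         [/\ inH isreal f, normv f <= 1 & r = normv (A *m f)]].

Definition is_frame (isreal : bool) (n N : nat) (F : 'I_N -> 'cV[C]_n) : Prop :=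
  (forall i, inH isreal (F i)) /\
  exists A B : R, [/\ 0 < A, A <= B &
    forall f, inH isreal f ->
      (A * normv f ^+ 2)%:C <= \sum_i `|inner f (F i)| ^+ 2
        <= (B * normv f ^+ 2)%:C].

Definition parseval_frame (isreal : bool) (n N : nat) (F : 'I_N -> 'cV[C]_n) :=
  is_frame isreal F /\
  forall f, inH isreal f -> \sum_i `|inner f (F i)| ^+ 2 = ((normv f) ^+ 2)%:C.

Definition probability_seq (N : nat) (p : 'I_N -> R) : Prop :=
  (forall i, 0 <= p i <= 1) /\ \sum_i p i = 1.

Definition weight_numbers (n N : nat) (p : 'I_N -> R) (q : 'I_N -> R) : Prop :=
  forall i, q i = (\sum_j p j) / (\sum_j p j - p i) * ((N - 1)%:R / n%:R).

Definition prob_uniform_parseval (isreal : bool) (n N : nat) (q : 'I_N -> R)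
  (F : 'I_N -> 'cV[C]_n) : Prop :=
  parseval_frame isreal F /\ forall i, normv (F i) ^+ 2 = (q i)^-1.

(* analysis operator Theta_F f = (<f,f_i>)_i *)
Definition Theta (n N : nat) (F : 'I_N -> 'cV[C]_n) : 'M[C]_(N, n) :=
  \matrix_(i, k) Num.conj (F i k 0).

Definition ThetaS (n N : nat) (G : 'I_N -> 'cV[C]_n) : 'M[C]_(n, N) :=
  \matrix_(k, i) G i k 0.

Definition frame_op (n N : nat) (F : 'I_N -> 'cV[C]_n) : 'M[C]_n :=
  ThetaS F *m Theta F.

Definition canonical_dual (n N : nat) (F : 'I_N -> 'cV[C]_n) : 'I_N -> 'cV[C]_n :=
  fun i => invmx (frame_op F) *m F i.

Definition is_dual (isreal : bool) (n N : nat) (F G : 'I_N -> 'cV[C]_n) : Prop :=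
  is_frame isreal G /\
  forall f, inH isreal f ->
    f = \sum_i inner f (F i) *: G i /\ f = \sum_i inner f (G i) *: F i.

Definition Dmat (N : nat) (q : 'I_N -> R) (L : {set 'I_N}) : 'M[C]_N :=
  diag_mx (\row_i (if i \in L then (q i)%:C else 0)).

Definition dmp (isreal : bool) (n N : nat) (q : 'I_N -> R) (m : nat)
  (F G : 'I_N -> 'cV[C]_n) : R :=
  \big[Num.max/0]_(L : {set 'I_N} | #|L| == m)
     opnorm isreal (ThetaS G *m Dmat q L *m Theta F).

Fixpoint opt_dual (isreal : bool) (n N : nat) (q : 'I_N -> R)
  (F : 'I_N -> 'cV[C]_n) (m : nat) (G : 'I_N -> 'cV[C]_n) : Prop :=
  match m with
  | 0 => is_dual isreal F G
  | m'.+1 => opt_dual isreal q F m' G /\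
      dmp isreal q m F G =
        inf [set r : R | exists G', opt_dual isreal q F m' G' /\
                                    r = dmp isreal q m F G']
  end.

End Frames.

(* Main.v *)
Require Import Defs.
From HB Require Import structures.
From mathcomp Require Import all_boot all_order all_algebra.
From mathcomp Require Import complex reals boolp classical_sets.
From mathcomp Require Import ring.
Import Order.TTheory GRing.Theory Num.Theory.
Local Open Scope ring_scope.
Set Implicit Arguments. Unset Strict Implicit. Unset Printing Implicit Defensive.

Section Aux.
Variable R : realType.
Local Notation C := R[i].

Lemma innerDl n (x y z : 'cV[C]_n) : inner (x + y) z = inner x z + inner y z.
Proof. by rewrite /inner -big_split; apply: eq_bigr => k _; rewrite mxE mulrDl. Qed.

Lemma innerZl n (c : C) (x z : 'cV[C]_n) : inner (c *: x) z = c * inner x z.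
Proof. by rewrite /inner mulr_sumr; apply: eq_bigr => k _; rewrite mxE mulrA. Qed.

Lemma innerC n (x y : 'cV[C]_n) : inner y x = Num.conj (inner x y).
Proof.
by rewrite /inner rmorph_sum; apply: eq_bigr => k _; rewrite rmorphM /= conjCK mulrC.
Qed.

Lemma innerDr n (x y z : 'cV[C]_n) : inner z (x + y) = inner z x + inner z y.
Proof. by rewrite innerC innerDl rmorphD /= -!innerC. Qed.

Lemma innerZr n (c : C) (x z : 'cV[C]_n) : inner z (c *: x) = Num.conj c * inner z x.
Proof. by rewrite innerC innerZl rmorphM /= -innerC. Qed.

Lemma innerNl n (x z : 'cV[C]_n) : inner (- x) z = - inner x z.
Proof. by rewrite -scaleN1r innerZl mulN1r. Qed.

Lemma innerNr n (x z : 'cV[C]_n) : inner z (- x) = - inner z x.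
Proof. by rewrite -scaleN1r innerZr rmorphN1 mulN1r. Qed.

Lemma inner_ge0 n (x : 'cV[C]_n) : 0 <= inner x x.
Proof. by apply: sumr_ge0 => k _; rewrite -normCK exprn_ge0. Qed.

Lemma inner_eq0 n (x : 'cV[C]_n) : inner x x = 0 -> x = 0.
Proof.
move=> h; apply/matrixP => k j; rewrite (ord1 j) mxE.
have := @psumr_eq0P _ _ xpredT (fun k => x k 0 * Num.conj (x k 0)) _ h k isT.
rewrite -normCK => H; move: H => /(_ _)/eqP.
rewrite expf_eq0 /= normr_eq0 => H; apply/eqP/H.
by move=> *; rewrite -normCK exprn_ge0.
Qed.

Lemma Re_ge0C (z : C) : 0 <= z -> ((complex.Re z)%:C)%C = z.
Proof. by move=> z0; rewrite complexRe; apply/Creal_ReP; apply: ger0_real. Qed.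

Lemma normv_sqC n (x : 'cV[C]_n) : ((normv x ^+ 2)%:C)%C = inner x x.
Proof.
have h0 := inner_ge0 x.
rewrite /normv sqr_sqrtr ?Re_ge0C //.
by rewrite -ler0c Re_ge0C.
Qed.

Lemma normv_ge0 n (x : 'cV[C]_n) : 0 <= normv x.
Proof. exact: sqrtr_ge0. Qed.

Lemma normv_le n (x : 'cV[C]_n) (t : R) : 0 <= t ->
  inner x x <= ((t ^+ 2)%:C)%C -> normv x <= t.
Proof.
move=> t0; rewrite -normv_sqC lecR.
by rewrite (ler_pXn2r (ltn0Sn 1)) // nnegrE normv_ge0.
Qed.

Lemma normv_eqt n (x : 'cV[C]_n) (t : R) : 0 <= t ->
  inner x x = ((t ^+ 2)%:C)%C -> normv x = t.
Proof.
move=> t0; rewrite -normv_sqC => /complexI /eqP.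
rewrite (eqrXn2 (ltn0Sn 1)) ?normv_ge0 //; by move/eqP.
Qed.

Lemma realC_conj (r : R) : Num.conj ((r%:C)%C : C) = (r%:C)%C.
Proof. by apply: conj_Creal; rewrite complex_real. Qed.

Lemma CS n (x y : 'cV[C]_n) :
  inner x y * Num.conj (inner x y) <= inner x x * inner y y.
Proof.
have [y0|ny0] := eqVneq (inner y y) 0.
  rewrite (inner_eq0 y0) /inner big1 ?mul0r ?mulr0 ?mulr_ge0 ?inner_ge0 //.
  by move=> k _; rewrite mxE rmorph0 mulr0.
have b0 : 0 < inner y y by rewrite lt_def ny0 inner_ge0.
have bc : Num.conj (inner y y) = inner y y by apply: conj_Creal; apply: gtr0_real.
set b := inner y y in b0 bc ny0 *; set c := inner x y; set a := inner x x.
have := inner_ge0 (b *: x + (- c) *: y).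
rewrite !innerDl !innerDr !innerZl !innerZr -/a -/b -/c (innerC x y) -/c bc.
rewrite rmorphN /=.
clearbody a b c.
have -> : b * (b * a) + b * (- Num.conj c * c) +
    (- c * (b * Num.conj c) + - c * (- Num.conj c * b)) = b * (b * a - c * Num.conj c).
  by ring.
by rewrite pmulr_rge0 // subr_ge0 [a * b]mulrC.
Qed.


Definition ev n (k : 'I_n) : 'cV[C]_n := delta_mx k 0.

Lemma inner_ev_l n (k : 'I_n) v : inner (ev k) v = Num.conj (v k 0).
Proof.
rewrite /inner (bigD1 k) //= big1 ?addr0 => [|j /negbTE jk].
  by rewrite mxE !eqxx mul1r.
by rewrite mxE jk mul0r.
Qed.

Lemma inner_ev n (k l : 'I_n) : inner (ev k) (ev l) = (k == l)%:R.
Proof. by rewrite inner_ev_l mxE eqxx andbT rmorph_nat eq_sym. Qed.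

Lemma inH_ev isreal n (k : 'I_n) : inH isreal (ev k).
Proof. by move=> j; rewrite /scal; case: isreal => //; rewrite mxE; case: (_ && _). Qed.

Lemma inH_D isreal n (x y : 'cV[C]_n) : inH isreal x -> inH isreal y -> inH isreal (x + y).
Proof.
move=> hx hy j; move: (hx j) (hy j); rewrite /scal mxE; case: isreal hx hy => // _ _.
by case: (x j 0) => a b; case: (y j 0) => c d /= /eqP -> /eqP ->; rewrite addr0.
Qed.

Lemma inH_Z isreal n (r : R) (x : 'cV[C]_n) : inH isreal x -> inH isreal ((r%:C)%C *: x).
Proof.
move=> hx j; move: (hx j); rewrite /scal mxE; case: isreal hx => // _.
by case: (x j 0) => a b /= /eqP ->; rewrite mulr0 mul0r addr0.
Qed.

Lemma ThetaF_mul n N (G : 'I_N -> 'cV[C]_n) f i : (Theta G *m f) i 0 = inner f (G i).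
Proof. by rewrite mxE /inner; apply: eq_bigr => k _; rewrite mxE mulrC. Qed.

Lemma ThetaS_mul n N (G : 'I_N -> 'cV[C]_n) (c : 'cV[C]_N) :
  ThetaS G *m c = \sum_i c i 0 *: G i.
Proof.
apply/matrixP => k j; rewrite (ord1 j) mxE summxE; apply: eq_bigr => i _.
by rewrite !mxE mulrC.
Qed.

Section Frame.
Variables (isreal : bool) (n N : nat) (F : 'I_N -> 'cV[C]_n).
Hypothesis hF : forall i, inH isreal (F i).
Hypothesis hP : forall f, inH isreal f ->
  \sum_i `|inner f (F i)| ^+ 2 = (((normv f) ^+ 2)%:C)%C.

Definition Bf (f g : 'cV[C]_n) := \sum_i inner f (F i) * Num.conj (inner g (F i)).

Lemma Bff f : inH isreal f -> Bf f f = inner f f.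
Proof. by move=> hf; rewrite -normv_sqC -hP //; apply: eq_bigr => i _; rewrite normCK. Qed.

Lemma B_expand x y c : Bf (x + c *: y) (x + c *: y) =
  Bf x x + c * Num.conj c * Bf y y + Num.conj c * Bf x y + c * Bf y x.
Proof.
rewrite /Bf !mulr_sumr -!big_split; apply: eq_bigr => i _ /=.
rewrite innerDl innerZl rmorphD rmorphM /=; ring.
Qed.

Lemma Bkk k : Bf (ev k) (ev k) = 1.
Proof. rewrite Bff; [by rewrite inner_ev eqxx | exact: inH_ev]. Qed.

Lemma Bkl_sum k l c : k != l -> inH isreal (ev k + c *: ev l) ->
  Num.conj c * Bf (ev k) (ev l) + c * Bf (ev l) (ev k) = 0.
Proof.
move=> kl h; have E := Bff h.
have E1 : Bf (ev k + c *: ev l) (ev k + c *: ev l) = 1 + c * Num.conj c +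
   (Num.conj c * Bf (ev k) (ev l) + c * Bf (ev l) (ev k)).
  by rewrite B_expand !Bkk; ring.
have E2 : inner (ev k + c *: ev l) (ev k + c *: ev l) = 1 + c * Num.conj c.
  have lk : (l == k) = false by rewrite eq_sym (negbTE kl).
  rewrite innerDl !innerDr !innerZl !innerZr !inner_ev !eqxx (negbTE kl) lk.
  rewrite /=; ring.
by move: E; rewrite E1 E2 -[RHS]addr0 => /addrI.
Qed.

Lemma B_off k l : k != l -> Bf (ev k) (ev l) = 0.
Proof.
move=> kl.
have h1 := Bkl_sum (c := 1) kl.
rewrite rmorph1 !mul1r in h1.
have h1' := h1 (inH_D (inH_ev _ _) (inH_Z 1 (inH_ev _ _))).
have sym : Bf (ev l) (ev k) = Bf (ev k) (ev l).
  case: isreal hF h1 Bkl_sum => [hF' _ _ | _ _ hs].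
    rewrite /Bf; apply: eq_bigr => i _; rewrite !inner_ev_l conjCK mulrC.
    have re : forall j, Num.conj (F i j 0) = F i j 0.
      move=> j; have := hF' i j; rewrite /scal; case: (F i j 0) => a b /= /eqP ->.
      by apply: conj_Creal; rewrite complex_real.
    by rewrite !re.
  have := hs k l 'i kl (fun _ => isT).
  rewrite conjCi mulNr addrC => /eqP; rewrite subr_eq0 => /eqP /mulfI; apply; exact: neq0Ci.
move: h1'; rewrite sym => /eqP; rewrite -mulr2n mulrn_eq0 /= => /eqP //.
Qed.

Lemma S1 : frame_op F = 1%:M.
Proof.
apply/matrixP => k l; rewrite !mxE.
have -> : \sum_j ThetaS F k j * Theta F j l = Bf (ev l) (ev k).
  rewrite /Bf; apply: eq_bigr => i _; rewrite !mxE !inner_ev_l conjCK mulrC.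
  by [].
have [<-|kl] := eqVneq k l; first by rewrite Bkk.
by rewrite B_off // eq_sym.
Qed.

Lemma canonF : canonical_dual F = F.
Proof. by apply: funext => i; rewrite /canonical_dual S1 invmx1 mul1mx. Qed.

Lemma recon f : \sum_i inner f (F i) *: F i = f.
Proof.
rewrite (eq_bigr (fun i => (Theta F *m f) i 0 *: F i)); last first.
  by move=> i _; rewrite ThetaF_mul.
by rewrite -ThetaS_mul mulmxA -/(frame_op F) S1 mul1mx.
Qed.

Lemma sum_normF : \sum_i inner (F i) (F i) = n%:R.
Proof.
rewrite /inner exchange_big /= (eq_bigr (fun _ => 1)) ?sumr_const ?card_ord //.
move=> k _; rewrite -(Bkk k) /Bf; apply: eq_bigr => i _.
by rewrite !inner_ev_l conjCK mulrC.
Qed.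

Lemma sum_innerFG (G : 'I_N -> 'cV[C]_n) :
  (forall f, inH isreal f -> f = \sum_i inner f (G i) *: F i) ->
  \sum_i inner (F i) (G i) = n%:R.
Proof.
move=> hG; rewrite /inner exchange_big /= (eq_bigr (fun _ => 1)) ?sumr_const ?card_ord //.
move=> k _; have := congr1 (fun M : 'cV[C]_n => M k 0) (hG (ev k) (inH_ev _ k)).
rewrite /= summxE mxE !eqxx /= => E; symmetry; etransitivity; first exact: E.
apply: eq_bigr => i _.
by rewrite mxE inner_ev_l mulrC.
Qed.

Lemma uniqF (G : 'I_N -> 'cV[C]_n) :
  (forall f, inH isreal f -> f = \sum_i inner f (G i) *: F i) ->
  (forall i, inner (G i) (G i) <= inner (F i) (F i)) -> forall i, G i = F i.
Proof.
move=> hG hle.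
have e1 : forall i, inner (F i - G i) (F i - G i) =
   (inner (G i) (G i) - inner (F i) (F i)) +
   (inner (F i) (F i) + inner (F i) (F i) - inner (F i) (G i) - inner (G i) (F i)).
  by move=> i; rewrite innerDl !innerDr !innerNl !innerNr; ring.
have hs : \sum_i inner (F i - G i) (F i - G i) <= 0.
  rewrite (eq_bigr _ (fun i _ => e1 i)) big_split /= !sumrB big_split /=.
  rewrite sum_normF (sum_innerFG hG).
  have -> : \sum_i inner (G i) (F i) = n%:R.
    by rewrite (eq_bigr _ (fun i _ => innerC (F i) (G i))) -rmorph_sum sum_innerFG // rmorph_nat.
  rewrite addrK subrr addr0 subr_le0 -sum_normF; apply: ler_sum => i _; exact: hle.
have h0 : \sum_i inner (F i - G i) (F i - G i) = 0.
  by apply/le_anti; rewrite hs sumr_ge0 // => i _; exact: inner_ge0.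
move=> i; have := @psumr_eq0P _ _ xpredT (fun i => inner (F i - G i) (F i - G i)) (fun i _ => inner_ge0 (F i - G i)) h0 i isT.
by move/inner_eq0/eqP; rewrite subr_eq0 => /eqP.
Qed.

End Frame.

Lemma Tf1 n N (F G : 'I_N -> 'cV[C]_n) (q : 'I_N -> R) i f :
  (ThetaS G *m Dmat q [set i] *m Theta F) *m f = (((q i)%:C)%C * inner f (F i)) *: G i.
Proof.
rewrite -!mulmxA ThetaS_mul (bigD1 i) //= big1 ?addr0.
  by rewrite /Dmat mul_diag_mx mxE ThetaF_mul !mxE finset.in_set1 eqxx.
move=> j /negbTE ji; by rewrite /Dmat mul_diag_mx !mxE finset.in_set1 ji mul0r scale0r.
Qed.

Lemma normvZ n (s : R) (v : 'cV[C]_n) : 0 <= s -> normv ((s%:C)%C *: v) = s * normv v.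
Proof.
move=> s0; apply: normv_eqt; first by rewrite mulr_ge0 ?normv_ge0.
rewrite innerZl innerZr realC_conj -normv_sqC -!rmorphM /=; congr (_ %:C)%C; ring.
Qed.

Lemma inH0 isreal n : inH isreal (0 : 'cV[C]_n).
Proof. by move=> k; rewrite /scal mxE; case: isreal. Qed.

Lemma normv0 n : normv (0 : 'cV[C]_n) = 0.
Proof.
apply: normv_eqt => //; rewrite /inner big1 ?expr0n ?rmorph0 // => k _.
by rewrite mxE mul0r.
Qed.

Lemma opnorm_rank1 isreal n (A : 'M[C]_n) (w v : 'cV[C]_n) (r : R) :
  0 <= r -> inH isreal w ->
  (forall f, A *m f = (((r%:C)%C) * inner f w) *: v) ->
  opnorm isreal A = r * normv w * normv v.
Proof.
move=> r0 hw hA; rewrite /opnorm.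
set E := (X in sup X).
have ub : ubound E (r * normv w * normv v).
  move=> x [f [hf nf ->]]; rewrite hA; apply: normv_le.
    by rewrite !mulr_ge0 ?normv_ge0.
  have -> : (((r * normv w * normv v) ^+ 2)%:C)%C =
      ((r%:C)%C * (r%:C)%C) * inner w w * inner v v.
    by rewrite -!normv_sqC -!rmorphM /=; congr (_ %:C)%C; ring.
  rewrite innerZl innerZr rmorphM /= realC_conj mulrA.
  apply: ler_wpM2r; first exact: inner_ge0.
  have -> : (r%:C)%C * inner f w * ((r%:C)%C * Num.conj (inner f w)) =
     ((r%:C)%C * (r%:C)%C) * (inner f w * Num.conj (inner f w)) by ring.
  apply: ler_pM; [by rewrite mulr_ge0 // ler0c | by rewrite -normCK exprn_ge0 | exact: lexx | ].
  apply: le_trans (CS f w) _; rewrite -[X in _ <= X]mul1r.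
  apply: ler_wpM2r; first exact: inner_ge0.
  rewrite -normv_sqC -(rmorph1 (real_complex R)) lecR.
  by rewrite exprn_ile1 ?normv_ge0.
have mem : E (r * normv w * normv v).
  have [w0|w0] := eqVneq (normv w) 0.
    exists 0; split; [exact: inH0 | by rewrite normv0 | ].
    by rewrite w0 mulr0 mul0r mulmx0 normv0.
  exists (((normv w)^-1)%:C%C *: w); split.
  - exact: inH_Z.
  - rewrite normvZ ?invr_ge0 ?normv_ge0 // mulVf //.
  - rewrite hA innerZl -normv_sqC -!rmorphM /= normvZ; last by rewrite !mulr_ge0 ?invr_ge0 ?exprn_ge0 ?normv_ge0.
      have e : (normv w)^-1 * normv w ^+ 2 = normv w by rewrite expr2 mulrA mulVf // mul1r.
      by rewrite e.
apply/le_anti/andP; split.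
  by apply: ge_sup => //; exists (r * normv w * normv v).
by apply: ub_le_sup => //; exists (r * normv w * normv v).
Qed.

Lemma dmp1_ge isreal n N (F G : 'I_N -> 'cV[C]_n) (q : 'I_N -> R) i :
  0 <= q i -> inH isreal (F i) ->
  q i * normv (F i) * normv (G i) <= dmp isreal q 1 F G.
Proof.
move=> q0 hFi; rewrite /dmp.
have := @le_bigmax_cond _ _ _ 0 [set i] (fun L => #|L| == 1%N)
   (fun L => opnorm isreal (ThetaS G *m Dmat q L *m Theta F)).
rewrite cards1 eqxx => /(_ isT).
by rewrite (opnorm_rank1 q0 hFi (Tf1 F G q i)).
Qed.

Lemma dmp1_le isreal n N (F G : 'I_N -> 'cV[C]_n) (q : 'I_N -> R) x :
  0 <= x -> (forall i, 0 <= q i) -> (forall i, inH isreal (F i)) ->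
  (forall i, q i * normv (F i) * normv (G i) <= x) -> dmp isreal q 1 F G <= x.
Proof.
move=> x0 q0 hF hx; apply/bigmax_leP; split => // L /cards1P [i ->].
by rewrite (opnorm_rank1 (q0 i) (hF i) (Tf1 F G q i)).
Qed.

End Aux.

Unset Implicit Arguments.

Theorem corollary4p2 (R : realType) (isreal : bool) (n N : nat)
  (p q : 'I_N -> R) (F : 'I_N -> 'cV[R[i]]_n) :
  (0 < n)%N -> (n <= N)%N ->
  probability_seq p ->
  (forall i, \sum_j p j - p i != 0) ->
  weight_numbers n p q ->
  prob_uniform_parseval isreal q F ->
  [/\ opt_dual isreal q F 1 (canonical_dual F),
      (forall G, opt_dual isreal q F 1 G -> forall i, G i = canonical_dual F i) &
      (forall m, (1 <= m <= N)%N -> opt_dual isreal q F m (canonical_dual F))].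
Proof.
move=> n0 nN [p01 psum] hne hq [[hfr hP] hnorm].
have hF : forall i, inH isreal (F i) := hfr.1.
have cF := canonF hF hP.
rewrite cF.
have N0 : (0 < N)%N by apply: leq_trans nN.
have N1 : (1 < N)%N.
  rewrite ltnNge; apply/negP => N1.
  have i0 : 'I_N := Ordinal N0.
  have := hne i0; rewrite (bigD1 i0) //= big1 ?addr0 ?subrr ?eqxx // => j ji.
  exfalso; move/negP: ji; apply; apply/eqP/val_inj => /=.
  move: (leq_trans (ltn_ord j) N1) (leq_trans (ltn_ord i0) N1).
  by case: (nat_of_ord j) => [|?]; case: (nat_of_ord i0) => [|?].
have qnz : forall i, q i != 0.
  move=> i; rewrite hq psum !mulf_neq0 ?invr_eq0 ?oner_eq0 //.
    by rewrite -psum hne.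
  by rewrite pnatr_eq0 -lt0n subn_gt0.
  by rewrite pnatr_eq0 -lt0n.
have q0 : forall i, 0 <= q i.
  by move=> i; rewrite -invr_ge0 -hnorm exprn_ge0 ?normv_ge0.
have qp : forall i, 0 < q i by move=> i; rewrite lt_def qnz q0.
have hqn : forall i, q i * normv (F i) * normv (F i) = 1.
  by move=> i; rewrite -mulrA -expr2 hnorm mulfV.
have nfp : forall i, 0 < normv (F i).
  move=> i; rewrite lt_def normv_ge0 andbT; apply/eqP => e.
  by have := hqn i; rewrite e !mulr0 => /eqP; rewrite eq_sym oner_eq0.
have dual_F : is_dual isreal F F.
  by split => // f _; rewrite (recon hF hP).
have i0 : 'I_N := Ordinal N0.
have dmpF : dmp isreal q 1 F F = 1.
  apply/le_anti/andP; split.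
    by apply: dmp1_le => // i; rewrite hqn.
  by rewrite -(hqn i0); apply: dmp1_ge.
have small : forall G, is_dual isreal F G -> dmp isreal q 1 F G <= 1 ->
    forall i, G i = F i.
  move=> G [_ hG] hd; apply: (uniqF hP (fun f hf => (hG f hf).2)) => i.
  have := le_trans (dmp1_ge G (q0 i) (hF i)) hd.
  rewrite -(hqn i) => h'.
  have h : normv (G i) <= normv (F i).
    by move: h'; rewrite ler_pM2l // mulr_gt0.
  rewrite -(normv_sqC (G i)) -(normv_sqC (F i)) lecR.
  by rewrite !expr2; apply: ler_pM; rewrite ?normv_ge0.
have lower : forall G, is_dual isreal F G -> 1 <= dmp isreal q 1 F G.
  move=> G hG; case: (lerP 1 (dmp isreal q 1 F G)) => // hlt.
  have e : G = F by apply: funext => i; apply: small => //; exact: ltW.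
  by move: hlt; rewrite e dmpF ltxx.
have opt1 : opt_dual isreal q F 1 F.
  split => //=; rewrite dmpF.
  apply/le_anti/andP; split.
    apply: lb_le_inf; first by exists 1, F.
    by move=> r [G' [hG' ->]]; exact: lower.
  have hl : has_lbound [set r : R | exists G', is_dual isreal F G' /\ r = dmp isreal q 1 F G'].
    by exists 1 => r [G' [hG' ->]]; exact: lower.
  by apply: (ge_inf hl); exists F; rewrite dmpF.
have uniq1 : forall G, opt_dual isreal q F 1 G -> forall i, G i = F i.
  move=> G [hG0 hd]; apply: small => //.
  by rewrite hd -opt1.2 dmpF.
have down : forall k G, opt_dual isreal q F k.+1 G -> opt_dual isreal q F 1 G.
  elim=> [|k IH] G h; [exact: h | case: h => h1 _; exact: IH].
have allk : forall k, opt_dual isreal q F k.+1 F.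
  elim=> [|k IH]; first exact: opt1.
  split; first exact: IH.
  have -> : [set r : R | exists G', opt_dual isreal q F k.+1 G' /\
        r = dmp isreal q k.+2 F G']%classic = [set dmp isreal q k.+2 F F]%classic.
    apply/seteqP; split => r.
      move=> [G' [hG' ->]].
      have eG : G' = F by apply: funext => i; apply: uniq1; exact: (down k).
      by rewrite eG.
    by move=> ->; exists F; split; [exact: IH | reflexivity].
  by rewrite inf1.
split; [exact: opt1 | exact: uniq1 | ].
case=> [|m] hm; first by [].
exact: allk.
Qed.
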